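(* Let $\mathscr{D}_n^B$ be the set of type $B_n$ derangements, and suppose the flag major index satisfies $$\sum_{\pi\in\mathscr{D}_n^B}q^{\mathrm{fmaj}(\pi)}=\sum_{0\le k\le n}(-1)^k q^{k(k-1)}[2n]_q[2n-2]_q\cdots[2k+2]_q$$ (empty product for $k=n$ equal to $1$). Then for every $m\ge 2$ and every $0\le r\le m-1$, $$\lim_{n\to\infty}\frac{\left|\{\pi\in\mathscr{D}_n^B:\ \mathrm{fmaj}(\pi)\equiv r\pmod m\}\right|}{|\mathscr{D}_n^B|}=\frac1m ,$$ i.e. the flag major index over $B_n$-derangements has the balanced property.
   Context: $[t]_q=1+q+\cdots+q^{t-1}$. A type $B_n$ permutation is a signed permutation $\pi$ of $[n]$ (a bijection $\pi$ of $\{\pm1,\dots,\pm n\}$ with $\pi(-i)=-\pi(i)$); a type $B_n$ derangement is one with $\pi(i)\ne i$ for all $1\le i\le n$. The flag major index is $\mathrm{fmaj}(\pi)=2\,\mathrm{maj}(\pi)+\mathrm{neg}(\pi)$ (Adin–Roichman), with $\mathrm{neg}(\pi)$ the number of negative entries; its generating function over $\mathscr{D}_n^B$ is the displayed formula. A statistic $\xi$ on sets $Q_n$ has the balanced property if for every $m\ge 2$ and every $0\le r\le m-1$, $\lim_{n\to\infty}|\{\pi\in Q_n:\xi(\pi)\equiv r \pmod m\}|/|Q_n| = 1/m$. *)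

(* Defs.v *)
From HB Require Import structures.
From mathcomp Require Import all_boot all_order all_fingroup all_algebra.
Set Implicit Arguments. Unset Strict Implicit. Unset Printing Implicit Defensive.
Import Order.TTheory GRing.Theory Num.Theory.

(* A type B_n (signed) permutation pi of [n] is encoded by a pair (s, e) with
   s : 'S_n and e : {ffun 'I_n -> bool}; in window notation
   pi(i+1) = (-1)^(e i) * (s i + 1) for i : 'I_n (0-based positions). *)
Definition signed_perm (n : nat) : finType :=
  ({perm 'I_n} * {ffun 'I_n -> bool})%type.

Definition sval n (p : signed_perm n) (i : 'I_n) : int :=
  if p.2 i then (- Posz (p.1 i).+1)%R else (Posz (p.1 i).+1)%R.

Definition derangementB n (p : signed_perm n) : bool :=
  [forall i : 'I_n, sval p i != Posz i.+1].

Definition DB (n : nat) : {set signed_perm n} := [set p | derangementB p].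

Definition neg n (p : signed_perm n) : nat := #|[set i : 'I_n | p.2 i]|.

(* value at 0-based position k (k < n), 0 outside the window *)
Definition svalnat n (p : signed_perm n) (k : nat) : int :=
  if insub k is Some i then sval p i else 0%R.

(* major index w.r.t. the usual order on integers:
   sum of positions j (1 <= j <= n-1) with pi(j) > pi(j+1)
   (pi(j) is at 0-based position j-1) *)
Definition maj n (p : signed_perm n) : nat :=
  \sum_(1 <= j < n)
     (if (svalnat p j < svalnat p j.-1)%R then j else 0%N).

Definition fmaj n (p : signed_perm n) : nat := (2 * maj p + neg p)%N.

Definition qint (t : nat) : {poly int} := (\sum_(i < t) 'X^i)%R.

(* Main.v *)
Require Import Defs.
From HB Require Import structures.
From mathcomp Require Import all_boot all_order all_fingroup all_algebra.
Import Order.TTheory GRing.Theory Num.Theory.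
From Stdlib Require Import Ring ArithRing.
Open Scope ring_scope.

Definition cs (m r : nat) (p : {poly int}) : int :=
  \sum_(i < size p) ((i %% m == r)%N%:R * p`_i).

Lemma cs_widen m r (p : {poly int}) N : (size p <= N)%N ->
  cs m r p = \sum_(i < N) ((i %% m == r)%N%:R * p`_i).
Proof.
move=> H; rewrite /cs -(subnKC H) big_split_ord /=.
rewrite [X in _ = _ + X]big1 ?addr0 // => i _.
by rewrite nth_default ?mulr0 // leq_addr.
Qed.

Lemma csD m r (p q : {poly int}) : cs m r (p + q) = cs m r p + cs m r q.
Proof.
rewrite !(@cs_widen m r _ (maxn (size p) (size q))) ?size_polyD ?leq_maxl ?leq_maxr //.
by rewrite -big_split /=; apply: eq_bigr => i _; rewrite coefD mulrDr.
Qed.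

Lemma cs0 m r : cs m r 0 = 0.
Proof. by rewrite /cs size_poly0 big_ord0. Qed.

Lemma cs_sum m r (I : Type) (s : seq I) (P : pred I) (F : I -> {poly int}) :
  cs m r (\sum_(i <- s | P i) F i) = \sum_(i <- s | P i) cs m r (F i).
Proof. exact: (big_morph _ (csD m r) (cs0 m r)). Qed.

Lemma csCM m r c (p : {poly int}) : cs m r (c%:P * p) = c * cs m r p.
Proof.
rewrite (@cs_widen m r _ (size p)); last by rewrite mul_polyC size_scale_leq.
rewrite /cs mulr_sumr; apply: eq_bigr => i _; by rewrite coefCM mulrCA.
Qed.

Lemma csXn m r j : cs m r 'X^j = (j %% m == r)%N%:R.
Proof.
rewrite /cs size_polyXn big_ord_recr /= coefXn eqxx mulr1 big1 ?add0r // => i _.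
by rewrite coefXn /= (ltn_eqF (ltn_ord i)) mulr0.
Qed.

Lemma count_mod m r c : (r < m)%N -> (\sum_(i < m) ((c + i) %% m == r)%N = 1)%N.
Proof.
move=> Hr; elim: c => [|c IH].
  rewrite (bigD1 (Ordinal Hr)) //= add0n modn_small // eqxx big1 // => i Hi.
  have Hn : (i : nat) != r by apply: contra Hi => /eqP Hi; apply/eqP; apply: val_inj.
  by rewrite add0n modn_small // (negbTE Hn).
case: m Hr IH => // m' Hr IH.
rewrite -IH big_ord_recr big_ord_recl /= addn0 addSnnS -{3}[m'.+1]add0n modnDr.
rewrite addnC; congr (_ + _)%N; apply: eq_bigr => i _; by rewrite /bump /= add1n addnS addSn.
Qed.


Lemma csXq m r c : (r < m)%N -> cs m r ('X^c * qint m) = 1.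
Proof.
move=> Hr; rewrite /qint mulr_sumr cs_sum.
rewrite (eq_bigr (fun i : 'I_m => ((c + i) %% m == r)%N%:R)); last by move=> i _; rewrite -exprD csXn.
by rewrite -natr_sum count_mod.
Qed.

Lemma csXqh m r a (h : {poly int}) : (r < m)%N -> cs m r ('X^a * (qint m * h)) = h.[1].
Proof.
move=> Hr; rewrite -{1}[h]coefK poly_def mulr_sumr mulr_sumr cs_sum horner_coef.
apply: eq_bigr => i _; rewrite expr1n mulr1 -mul_polyC.
have -> : 'X^a * (qint m * ((h`_i)%:P * 'X^i)) = (h`_i)%:P * ('X^(a+i)%N * qint m).
  by rewrite exprD [qint m * _]mulrC -!mulrA mulrCA.
by rewrite csCM csXq // mulr1.
Qed.

Definition pnn (p : {poly int}) := forall i, 0 <= p`_i.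

Lemma pnn_Xn j : pnn 'X^j.
Proof. by move=> i; rewrite coefXn ler0n. Qed.

Lemma pnn_mul p q : pnn p -> pnn q -> pnn (p * q).
Proof.
move=> Hp Hq i; rewrite coefM; apply: sumr_ge0 => j _; exact: mulr_ge0.
Qed.

Lemma pnn_qint t : pnn (qint t).
Proof. move=> i; rewrite /qint coef_sum; apply: sumr_ge0 => j _; exact: pnn_Xn. Qed.

Lemma pnn_prodq a b : pnn (\prod_(a <= j < b) qint (2 * j)).
Proof.
apply: (big_ind pnn) => //; last by move=> j _; exact: pnn_qint.
  by move=> i; rewrite coefC; case: eqP.
exact: pnn_mul.
Qed.

Lemma cs_ge0 m r p : pnn p -> 0 <= cs m r p.
Proof. move=> H; apply: sumr_ge0 => i _; exact: mulr_ge0. Qed.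

Lemma cs_le1 m r p : pnn p -> cs m r p <= p.[1].
Proof.
move=> H; rewrite horner_coef; apply: ler_sum => i _.
by rewrite expr1n mulr1; case: (_ == _); rewrite ?mul1r ?mul0r.
Qed.

Lemma qint1 t : (qint t).[1] = t%:R.
Proof.
rewrite /qint horner_sum (eq_bigr (fun _ => 1)); last by move=> i _; rewrite hornerXn expr1n.
by rewrite sumr_const card_ord.
Qed.

Lemma qintD a b : qint (a + b) = qint a + 'X^a * qint b.
Proof. by rewrite /qint big_split_ord mulr_sumr; congr (_ + _); apply: eq_bigr => i _; rewrite exprD. Qed.

Lemma qint_mul m c : qint (m * c) = qint m * \sum_(t < c) 'X^(m * t).
Proof.
elim: c => [|c IH]; first by rewrite muln0 big_ord0 mulr0 /qint big_ord0.
rewrite mulnS addnC qintD IH big_ord_recr /= mulrDr; congr (_ + _).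
by rewrite mulrC.
Qed.

Definition T n k : {poly int} :=
  (-1) ^+ k * 'X^(k * k.-1) * \prod_(k.+1 <= j < n.+1) qint (2 * j).

Lemma signP k : ((-1) ^+ k : {poly int}) = ((-1) ^+ k)%:P.
Proof. by rewrite polyC_exp polyCN polyC1. Qed.

Lemma T_split n k : T n k = ((-1) ^+ k)%:P * ('X^(k * k.-1) * \prod_(k.+1 <= j < n.+1) qint (2 * j)).
Proof. by rewrite /T signP mulrA. Qed.

Lemma T_bal n m r k : (r < m)%N -> (k + m <= n)%N -> cs m r (T n k) *+ m = (T n k).[1].
Proof.
move=> Hr Hk; have m0 : (0 < m)%N by apply: leq_ltn_trans Hr.
set j0 := ((k %/ m).+1 * m)%N.
have H1 : (k < j0)%N by apply: ltn_ceil.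
have H2 : (j0 <= k + m)%N by rewrite /j0 mulSn addnC leq_add2r leq_trunc_div.
have [h Hh] : exists h, \prod_(k.+1 <= j < n.+1) qint (2 * j) = qint m * h.
  have Hjn : (j0 <= n)%N := leq_trans H2 Hk.
  rewrite (big_cat_nat _ (n := j0)) //; last exact: leqW.
  rewrite (big_ltn (m := j0)) //.
  have -> : (2 * j0 = m * (2 * (k %/ m).+1))%N by rewrite /j0 mulnA mulnC.
  rewrite qint_mul /=; eexists.
  by rewrite mulrCA -!mulrA.
rewrite T_split Hh csCM csXqh // hornerM hornerC hornerM hornerXn expr1n mul1r hornerM qint1.
by rewrite -mulrnAr mulr_natl.
Qed.

Definition Pn n k : nat := (\prod_(k.+1 <= j < n.+1) (2 * j))%N.

Lemma T_bound n m r k :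
  `|cs m r (T n k) *+ m - (T n k).[1]| <= (Pn n k)%:R *+ m.+1.
Proof.
set Q := 'X^(k * k.-1) * \prod_(k.+1 <= j < n.+1) qint (2 * j).
have HQ : pnn Q by apply: pnn_mul; [exact: pnn_Xn | exact: pnn_prodq].
have Q1 : Q.[1] = (Pn n k)%:R.
  rewrite /Q hornerM hornerXn expr1n mul1r horner_prod /Pn natr_prod.
  by apply: eq_bigr => j _; rewrite qint1.
rewrite T_split -/Q csCM hornerM hornerC -mulrnAr -mulrBr normrM normrX normrN1 expr1n mul1r.
apply: le_trans (ler_normB _ _) _.
rewrite !ger0_norm ?Q1 ?ler0n ?mulrn_wge0 ?cs_ge0 // mulrS addrC.
by rewrite lerD2r lerMn2r -Q1 cs_le1 ?orbT.
Qed.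

Lemma Pn_mono n a k : (a <= k)%N -> (k <= n)%N -> (Pn n k <= Pn n a)%N.
Proof.
move=> Hak Hkn; rewrite /Pn [X in (_ <= X)%N](big_cat_nat _ (n := k.+1)) //=.
apply: leq_pmull; rewrite big_nat_cond; apply: prodn_cond_gt0 => j /andP[/andP[Hj _] _]; by rewrite muln_gt0 (leq_trans _ Hj).
Qed.

Lemma F_bound n m r : (r < m)%N -> (m <= n)%N ->
  `|cs m r (\sum_(k < n.+1) T n k) *+ m - (\sum_(k < n.+1) T n k).[1]|
    <= (Pn n (n.+1 - m))%:R *+ (m.+1 * m).
Proof.
move=> Hr Hmn.
rewrite cs_sum horner_sum -sumrMnl -sumrB.
rewrite -(big_mkord xpredT (fun k => cs m r (T n k) *+ m - (T n k).[1])).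
rewrite (big_cat_nat _ (n := n.+1 - m)) //=; last exact: leq_subr.
rewrite [X in `|X + _|]big1_seq ?add0r; last first.
  move=> k /andP[_]; rewrite mem_index_iota => /andP[_ Hk].
  have Hk' : (k + m <= n)%N.
    by move: Hk; rewrite ltn_subRL ltnS addnC.
  by rewrite (T_bal n m r k Hr Hk') subrr.
apply: le_trans (ler_norm_sum _ _ _) _.
apply: (@le_trans _ _ (\sum_(n.+1 - m <= i < n.+1) (Pn n (n.+1 - m))%:R *+ m.+1)).
  rewrite big_seq_cond [X in _ <= X]big_seq_cond; apply: ler_sum => k.
  rewrite andbT mem_index_iota => /andP[H1 H2].
  apply: le_trans (T_bound n m r k) _.
  by rewrite lerMn2r ler_nat Pn_mono ?orbT.
rewrite sumr_const_nat subKn; last exact: leqW.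
by rewrite mulrnA.
Qed.
Lemma dist_nat (R : realDomainType) (x y e : nat) :
  (`|x%:R - y%:R : R| <= e%:R) = ((x <= y + e) && (y <= x + e))%N.
Proof.
rewrite ler_norml lerBlDr -natrD ler_nat andbC; congr (_ && _).
  by rewrite addnC.
by rewrite -opprB lerN2 lerBlDr -natrD ler_nat addnC.
Qed.

Lemma final_rat (c D m E : nat) (eps : rat) : (0 < m)%N -> (0 < D)%N ->
  (c * m <= D + E)%N -> (D <= c * m + E)%N -> E%:R < eps * (D * m)%:R ->
  `|c%:R / D%:R - m%:R^-1| < eps.
Proof.
move=> m0 D0 H1 H2 H3.
have mn : (m%:R : rat) != 0 by rewrite pnatr_eq0 -lt0n.
have Dn : (D%:R : rat) != 0 by rewrite pnatr_eq0 -lt0n.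
have -> : c%:R / D%:R - m%:R^-1 = ((c * m)%:R - D%:R) / (D * m)%:R :> rat.
  rewrite !natrM invfM mulrBl mulrACA divff // mulr1 mulrA divff // mul1r.
  by [].
rewrite normrM normfV normr_nat ltr_pdivrMr ?ltr0n ?muln_gt0 ?m0 ?D0 //.
apply: le_lt_trans H3; rewrite dist_nat; apply/andP; split=> //.
Qed.

Lemma L1 n m r : (#|[set p in DB n | (fmaj p %% m)%N == r]|%:R : int) =
  cs m r (\sum_(p in DB n) 'X^(fmaj p)).
Proof.
rewrite cs_sum (eq_bigr (fun p => ((fmaj p %% m)%N == r)%N%:R)); last by move=> p _; rewrite csXn.
rewrite -natr_sum; congr (_%:R).
rewrite (eq_bigr (fun p => if (fmaj p %% m)%N == r then 1 else 0)%N); last by move=> p _; case: eqP.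
rewrite -big_mkcondr sum1_card cardsE; by apply: eq_card.
Qed.

Lemma L2 n : (#|DB n|%:R : int) = (\sum_(p in DB n) 'X^(fmaj p)).[1].
Proof.
rewrite horner_sum (eq_bigr (fun _ => 1)); last by move=> p _; rewrite hornerXn expr1n.
by rewrite sumr_const.
Qed.

Lemma L3 n : (n`! <= #|DB n|)%N.
Proof.
pose f (s : {perm 'I_n}) : signed_perm n := (s, [ffun => true]).
have inj_f : injective f by move=> s t [].
have H : f @: [set: {perm 'I_n}] \subset DB n.
  apply/subsetP => _ /imsetP[s _ ->]; rewrite inE; apply/forallP => i.
  by rewrite /Defs.sval /= ffunE.
rewrite -[X in (X <= _)%N]card_Sn -cardsT -(card_imset _ inj_f); exact: subset_leq_card H.
Qed.

Lemma L4 n a : (a <= n)%N -> (Pn n a * a`! = 2 ^ (n - a) * n`!)%N.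
Proof.
move=> Ha.
rewrite (fact_prod n) (big_cat_nat _ (n := a.+1)) //= -fact_prod.
rewrite /Pn big_split /= prod_nat_const_nat subSS.
by rewrite -mulnA [(a`! * _)%N]mulnC.
Qed.

Theorem mainTheorem7 :
  (forall n : nat,
     (\sum_(p in DB n) 'X^(fmaj p) : {poly int})%R =
     (\sum_(k < n.+1) (-1) ^+ k * 'X^(k * k.-1) *
        \prod_(k.+1 <= j < n.+1) qint (2 * j))%R) ->
  forall m r : nat, (2 <= m)%N -> (r <= m - 1)%N ->
  forall eps : rat, (0 < eps)%R ->
  exists N : nat, forall n : nat, (N <= n)%N ->
    (`| (#|[set p in DB n | (fmaj p %% m)%N == r]|%:R / #|DB n|%:R : rat)
        - m%:R^-1 | < eps)%R.
Proof.
move=> Hyp m r Hm Hr eps Heps.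
have m0 : (0 < m)%N by apply: leq_trans Hm.
have Hrm : (r < m)%N by rewrite (leq_ltn_trans Hr) // subn1 ltn_predL.
set B := (m.+1 * 2 ^ m)%N.
have Hx : 0 <= (B%:R / eps : rat) by rewrite divr_ge0 ?ler0n ?ltW.
set K := Num.Def.archi_bound (B%:R / eps : rat).
have HK := archi_boundP Hx; rewrite -/K in HK.
exists (K + m)%N => n Hn.
have Hmn : (m <= n)%N by apply: leq_trans Hn; rewrite leq_addl.
set a := (n.+1 - m)%N.
have Ha : (K < a)%N by rewrite /a ltn_subRL addnC ltnS.
have Fb := F_bound n m r Hrm Hmn.
rewrite /T -Hyp -L1 -L2 -mulrnA -[X in _ <= X]mulrnA dist_nat in Fb.
case/andP: Fb => F1 F2.
have D0 : (0 < #|DB n|)%N by apply: leq_trans (L3 n); exact: fact_gt0.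
apply: (final_rat _ _ _ _ _ m0 D0 F1 F2); rewrite -/a.
set D := #|DB n|; set P := Pn n a.
have Han : (a <= n)%N by rewrite /a leq_subLR (addnC m) -addn1 leq_add2l.
have Hna : (n - a <= m)%N.
  by apply: leq_trans (leq_sub2r _ (leqnSn n)) _; rewrite subKn // leqW.
have HE : (P * a <= 2 ^ m * D)%N.
  apply: leq_trans (leq_mul (leqnn _) (fact_geq a)) _.
  rewrite /P L4 //; apply: leq_mul (L3 n); exact: leq_pexp2l.
have HE2 : (P * (m.+1 * m) * a <= B * (D * m))%N.
  rewrite mulnAC (_ : B * (D * m) = 2 ^ m * D * (m.+1 * m))%N.
    by rewrite leq_mul2r HE orbT.
  by rewrite /B -!multE; ring.
have a0 : (0 < a)%N by apply: leq_ltn_trans Ha.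
have Hba : B%:R < eps * a%:R.
  rewrite mulrC -ltr_pdivrMr //; apply: lt_le_trans HK _; by rewrite ler_nat ltnW.
rewrite -(ltr_pM2r (x := a%:R)) ?ltr0n //.
apply: (@le_lt_trans _ _ ((B * (D * m))%N%:R)); first by rewrite -natrM ler_nat.
by rewrite natrM mulrAC ltr_pM2r // ltr0n muln_gt0 D0 m0.
Qed.
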